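(* Let $(\mathcal{F}_\alpha)_{\alpha<\omega_1}$ be a transfinite family. For every $\alpha<\omega_1$ and every infinite $L\subset\mathbb{N}$, $\mathbb{I}(\mathcal{F}_\alpha,L)=\alpha$.
   Context: An approximating family assigns to each countable limit ordinal $\alpha$ finite sets $A_n(\alpha)\subset[0,\alpha)$, $n\in\mathbb{N}$, with $A_n(\alpha)\subset A_{n+1}(\alpha)$ and $\lim_n\max A_n(\alpha)=\alpha$. The transfinite family it defines: $\mathcal{F}_0=\{\emptyset\}$; $\mathcal{F}_{\beta+1}=\{\{n\}\cup E:n\in\mathbb{N},E\in\mathcal{F}_\beta\}\cup\{\emptyset\}$; for limit $\alpha$, $\mathcal{F}_\alpha=\{\emptyset\}\cup\{E\ne\emptyset:E\in\bigcup_{\beta\in A_{\min E}(\alpha)}\mathcal{F}_\beta\}$. For $N=\{n_1<n_2<\dots\}$, $\mathcal{F}^N=\{\{n_i:i\in E\}:E\in\mathcal{F}\}$. A hereditary set $\mathcal{A}$ of finite subsets of $\mathbb{N}$ is $\alpha$-large on an infinite $P$ if for every infinite $M\subset P$ there is an infinite $N\subset M$ with $\mathcal{F}_\alpha^N\subset\mathcal{A}$ (independent of the approximating family); $\mathbb{I}(\mathcal{A},P)=\sup\{\alpha<\omega_1:\mathcal{A}\text{ is }\alpha\text{-large on }P\}$. *)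

(* Defs.v *)
From HB Require Import structures.
From Stdlib Require List.
From mathcomp Require Import all_boot finmap.
Set Implicit Arguments. Unset Strict Implicit. Unset Printing Implicit Defensive.
Local Open Scope fset_scope.

(* The ordinals below omega_1 are modelled abstractly by a type [O] with a
   strict relation [lt] which is a well-order in which every element has only
   countably many predecessors (so every element is a countable ordinal). *)
Definition countable_wellorder (O : Type) (lt : O -> O -> Prop) : Prop :=
  [/\ (forall a, ~ lt a a),
      (forall a b c, lt a b -> lt b c -> lt a c),
      (forall a b, lt a b \/ a = b \/ lt b a),
      well_founded lt &
      (forall a, exists f : O -> nat,
          forall x y, lt x a -> lt y a -> f x = f y -> x = y)].

Definition is_zero (O : Type) (lt : O -> O -> Prop) (a : O) : Prop :=
  forall b, ~ lt b a.

Definition is_succ_of (O : Type) (lt : O -> O -> Prop) (a b : O) : Prop :=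
  lt b a /\ forall c, lt c a -> c = b \/ lt c b.

Definition is_limit (O : Type) (lt : O -> O -> Prop) (a : O) : Prop :=
  ~ is_zero lt a /\ ~ (exists b, is_succ_of lt a b).

(* A a n = A_n(a), a finite subset of [0,a), given as a list. *)
Definition approx_family (O : Type) (lt : O -> O -> Prop)
    (A : O -> nat -> seq O) : Prop :=
  forall a, is_limit lt a ->
    [/\ (forall n b, List.In b (A a n) -> lt b a),
        (forall n b, List.In b (A a n) -> List.In b (A a n.+1)) &
        (* lim_n max A_n(a) = a (order topology) *)
        (forall b, lt b a -> exists N, forall n, N <= n ->
            exists c, List.In c (A a n) /\ lt b c)].

Definition transfinite_family (O : Type) (lt : O -> O -> Prop)
    (A : O -> nat -> seq O) (F : O -> {fset nat} -> Prop) : Prop :=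
  (forall a, is_zero lt a -> forall E, F a E <-> E = fset0) /\
  (forall a b, is_succ_of lt a b -> forall E,
      F a E <-> (E = fset0 \/ exists n E', F b E' /\ E = n |` E')) /\
  (forall a, is_limit lt a -> forall E,
      F a E <-> (E = fset0 \/
                 exists k, [/\ k \in E, (forall x, x \in E -> k <= x) &
                               exists b, List.In b (A a k) /\ F b E])).

Definition infinite_set (P : nat -> Prop) : Prop :=
  forall m, exists n, m <= n /\ P n.

(* infinite subsets of N are represented by their increasing enumerations *)
Definition incr (e : nat -> nat) : Prop := forall i, e i < e i.+1.

(* F^N = { {n_i : i in E} : E in F } *)
Definition fam_image (e : nat -> nat) (E : {fset nat}) : {fset nat} :=
  [fset e i | i in E].

Definition large (O : Type) (G : O -> {fset nat} -> Prop) (a : O)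
    (Aset : {fset nat} -> Prop) (P : nat -> Prop) : Prop :=
  forall m, incr m -> (forall i, P (m i)) ->
    exists n, [/\ incr n, (forall i, exists j, n i = m j) &
                  forall E, G a E -> Aset (fam_image n E)].

Definition is_sup (O : Type) (lt : O -> O -> Prop) (S : O -> Prop) (a : O)
  : Prop :=
  (forall b, S b -> ~ lt a b) /\
  (forall c, (forall b, S b -> ~ lt c b) -> ~ lt c a).

(* Main.v *)
Require Import Defs.
From HB Require Import structures.
From mathcomp Require Import all_boot finmap.
From Stdlib Require Import Classical ClassicalEpsilon.
Set Implicit Arguments. Unset Strict Implicit.
Local Open Scope fset_scope.

Inductive TT (O : Type) (lt : O -> O -> Prop) (Fam : {fset nat} -> Prop)
  : {fset nat} -> O -> Prop :=
| TTc (E : {fset nat}) (c : O) (ch : O -> nat -> nat) :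
    Fam E -> (forall b N, lt b c -> N <= ch b N) ->
    (forall b N, lt b c -> TT lt Fam (ch b N |` E) b) -> TT lt Fam E c.
Arguments TT {O} lt Fam _ _.
Arguments TTc {O lt Fam} E c ch _ _ _.

Lemma TT_intro O (lt : O -> O -> Prop) Fam E c :
  Fam E -> (forall b, lt b c -> forall N, exists j, N <= j /\ TT lt Fam (j |` E) b) ->
  TT lt Fam E c.
Proof.
move=> HE H.
have Hex : forall bN : O * nat, exists j, lt bN.1 c -> bN.2 <= j /\ TT lt Fam (j |` E) bN.1.
  move=> [b N] /=. case: (classic (lt b c)) => hb.
  - have [j hj] := H b hb N. by exists j.
  - by exists 0.
pose ch := fun b N => proj1_sig (constructive_indefinite_description _ (Hex (b, N))).
have Hch : forall b N, lt b c -> N <= ch b N /\ TT lt Fam (ch b N |` E) b.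
  move=> b N hb. rewrite /ch. case: (constructive_indefinite_description _ _) => j /= hj.
  exact: (hj hb).
apply: (TTc E c ch) => //.
- by move=> b N hb; case: (Hch b N hb).
- by move=> b N hb; case: (Hch b N hb).
Qed.

Lemma TT_elim O (lt : O -> O -> Prop) Fam E c :
  TT lt Fam E c ->
  Fam E /\ (forall b, lt b c -> forall N, exists j, N <= j /\ TT lt Fam (j |` E) b).
Proof.
move=> HT; destruct HT as [E' c' ch HE H1 H2]; split => // b hb N.
by exists (ch b N); split; auto.
Qed.

Lemma TT_mono O (lt : O -> O -> Prop)
  (htr : forall a b c, lt a b -> lt b c -> lt a c) Fam E c c' :
  TT lt Fam E c -> (lt c' c \/ c' = c) -> TT lt Fam E c'.
Proof.
move=> HT hc; have [HE H] := TT_elim HT. apply: TT_intro => // b hb N.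
apply: H. case: hc => [hc|hc]; [exact: htr hb hc| by rewrite -hc].
Qed.

Lemma TT_transport O (lt : O -> O -> Prop) (F1 F2 : {fset nat} -> Prop)
  (P : {fset nat} -> Prop) (f : {fset nat} -> {fset nat}) (g : nat -> nat) :
  (forall X, P X -> F1 X -> F2 (f X)) ->
  (forall X, P X -> exists M, forall j, M <= j ->
       [/\ P (j |` X), f (j |` X) = g j |` f X & j <= g j]) ->
  forall E c, TT lt F1 E c -> P E -> TT lt F2 (f E) c.
Proof.
move=> h1 h2 E c HT. elim: HT => {}E {}c ch HE Hch _ IH PE.
apply: TT_intro; first exact: h1.
move=> b hb N. have [M HM] := h2 E PE.
have hj : maxn N M <= ch b (maxn N M) by exact: Hch.
have [hP hf hg] := HM (ch b (maxn N M)) (leq_trans (leq_maxr _ _) hj).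
exists (g (ch b (maxn N M))); split.
- exact: leq_trans (leq_maxl _ _) (leq_trans hj hg).
- rewrite -hf. exact: IH.
Qed.

Lemma TT_split2 O (lt : O -> O -> Prop)
  (htr : forall a b c, lt a b -> lt b c -> lt a c)
  (htri : forall a b, lt a b \/ a = b \/ lt b a)
  (F F1 F2 : {fset nat} -> Prop) :
  (forall X, F X -> F1 X \/ F2 X) ->
  (forall X j, F1 (j |` X) -> F1 X) -> (forall X j, F2 (j |` X) -> F2 X) ->
  forall E c, TT lt F E c -> TT lt F1 E c \/ TT lt F2 E c.
Proof.
move=> hF h1 h2 E c HT. elim: HT => {}E {}c ch HE Hch _ IH.
case: (classic (exists b, lt b c)) => [[b0 hb0]|nob]; last first.
  case: (hF E HE) => H; [left|right]; apply: TT_intro => // b hb;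
  by exfalso; apply: nob; exists b.
case: (classic (forall b, lt b c -> forall N, exists j, N <= j /\ TT lt F1 (j |` E) b)) => [A1|nA1].
  left; apply: TT_intro => //. have [j [_ hj0]] := A1 b0 hb0 0; have [hj _] := TT_elim hj0.
  exact: h1 hj.
case: (classic (forall b, lt b c -> forall N, exists j, N <= j /\ TT lt F2 (j |` E) b)) => [A2|nA2].
  right; apply: TT_intro => //. have [j [_ hj0]] := A2 b0 hb0 0; have [hj _] := TT_elim hj0.
  exact: h2 hj.
exfalso; apply: nA1 => b1 hb1 N1; apply: NNPP => n1.
apply: nA2 => b2 hb2 N2; apply: NNPP => n2.
have [bm [hbm m1 m2]] : exists bm, [/\ lt bm c, (lt b1 bm \/ b1 = bm) & (lt b2 bm \/ b2 = bm)].
  case: (htri b1 b2) => [h|[h|h]].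
  - by exists b2; split => //; [left|right].
  - by exists b2; split => //; right.
  - by exists b1; split => //; [right|left].
have hj := Hch bm (N1 + N2)%N hbm.
case: (IH bm (N1 + N2)%N hbm) => H.
- apply: n1; exists (ch bm (N1 + N2)%N); split.
    exact: leq_trans (leq_addr _ _) hj.
  apply: (TT_mono htr H). by case: m1 => [?|e]; [left|right].
- apply: n2; exists (ch bm (N1 + N2)%N); split.
    exact: leq_trans (leq_addl _ _) hj.
  apply: (TT_mono htr H). by case: m2 => [?|e]; [left|right].
Qed.

Lemma TT_split_list O (lt : O -> O -> Prop)
  (htr : forall a b c, lt a b -> lt b c -> lt a c)
  (htri : forall a b, lt a b \/ a = b \/ lt b a)
  (l : seq O) (Fi : O -> {fset nat} -> Prop) :
  (forall i X j, Fi i (j |` X) -> Fi i X) ->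
  forall (F : {fset nat} -> Prop),
  (forall X, F X -> exists i, List.In i l /\ Fi i X) ->
  forall E c, TT lt F E c -> exists i, List.In i l /\ TT lt (Fi i) E c.
Proof.
move=> hcl. elim: l => [|i l IHl] F hF E c HT.
  by have [_ [/= []]] := hF E (proj1 (TT_elim HT)).
have := TT_split2 htr htri (F1 := Fi i) (F2 := fun X => exists i', List.In i' l /\ Fi i' X) _ _ _ HT.
case.
- move=> X /hF [i' [/= [->|hi] H]]; [by left|right; by exists i'].
- exact: hcl.
- by move=> X j [i' [hi H]]; exists i'; split => //; exact: hcl H.
- by move=> H; exists i; split => //; left.
- move=> /(IHl _ (fun X h => h)) [i' [hi H]]. by exists i'; split => //; right.
Qed.
Lemma classify O (lt : O -> O -> Prop) a :
  is_zero lt a \/ (exists b, is_succ_of lt a b) \/ is_limit lt a.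
Proof.
case: (classic (is_zero lt a)) => h; [by left|right].
case: (classic (exists b, is_succ_of lt a b)) => h'; [by left|right; by split].
Qed.

Lemma fmin (X : {fset nat}) x : x \in X ->
  exists k, k \in X /\ forall y, y \in X -> k <= y.
Proof.
move=> hx. have ex : exists k, (fun k => k \in X) k by exists x.
case: (ex_minnP ex) => k hk hmin. by exists k.
Qed.

Lemma A_mono O (lt : O -> O -> Prop) A a (hA : approx_family lt A)
  (ha : is_limit lt a) b n n' :
  List.In b (A a n) -> n <= n' -> List.In b (A a n').
Proof.
have [_ hs _] := hA a ha. move=> hb /subnK <-.
elim: (n' - n) => [|k IHk] //=. rewrite addSn. exact: hs.
Qed.

Lemma F_empty O (lt : O -> O -> Prop) A F (hF : transfinite_family lt A F) a :
  F a fset0.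
Proof.
case: hF => [hz [hs hl]]. case: (classify lt a) => [h|[[b h]|h]].
- exact: (proj2 (hz a h _)).
- by apply: (proj2 (hs a b h _)); left.
- by apply: (proj2 (hl a h _)); left.
Qed.

Lemma F_succ_incl O (lt : O -> O -> Prop) A F (hF : transfinite_family lt A F)
  a b (h : is_succ_of lt a b) X : F b X -> F a X.
Proof.
case: hF => [hz [hs hl]] HX. apply: (proj2 (hs a b h X)).
case: (boolP (X == fset0)) => [/eqP->|/fset0Pn [x hx]]; [by left|right].
exists x, X; split => //. by rewrite mem_fset1U.
Qed.

Section dummy. End dummy.

Lemma F_hered O (lt : O -> O -> Prop) (hwf : well_founded lt) A F
  (hA : approx_family lt A) (hF : transfinite_family lt A F) :
  forall a Y Z, F a Y -> Z `<=` Y -> F a Z.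
Proof.
move=> a; induction (hwf a) as [a _ IH] => Y Z HY hZ.
have [hz [hs hl]] := hF.
case: (classify lt a) => [h|[[b h]|h]].
- have Y0 := proj1 (hz a h Y) HY. apply: (proj2 (hz a h Z)).
  by apply/eqP; rewrite -fsubset0 -Y0.
- case: (proj1 (hs a b h Y) HY) => [Y0|[n [E' [HE' EY]]]].
    apply: (proj2 (hs a b h Z)); left. by apply/eqP; rewrite -fsubset0 -Y0.
  case: (boolP (n \in Z)) => hn.
    apply: (proj2 (hs a b h Z)); right; exists n, (Z `\ n); split; last by rewrite fsetD1K.
    apply: (IH b (proj1 h) E') => //. apply/fsubsetP => x; rewrite !inE => /andP [hxn hx].
    have := (fsubsetP hZ) x hx. by rewrite EY !inE (negbTE hxn).
  apply: (F_succ_incl hF h). apply: (IH b (proj1 h) E') => //.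
  apply/fsubsetP => x hx. have := (fsubsetP hZ) x hx. rewrite EY !inE.
  case/orP => // /eqP exn. by rewrite -exn hx in hn.
- case: (proj1 (hl a h Y) HY) => [Y0|[k [hk hkmin [b [hb HbY]]]]].
    apply: (proj2 (hl a h Z)); left. by apply/eqP; rewrite -fsubset0 -Y0.
  case: (boolP (Z == fset0)) => [/eqP->|/fset0Pn [z hz0]].
    by apply: (proj2 (hl a h _)); left.
  have [k1 [hk1 hk1min]] := fmin hz0.
  have [hAl _ _] := hA a h.
  apply: (proj2 (hl a h Z)); right; exists k1; split => //; exists b; split.
  + apply: (A_mono hA h hb). apply: hkmin. exact: (fsubsetP hZ).
  + exact: (IH b (hAl _ _ hb) Y).
Qed.

Lemma F_repl O (lt : O -> O -> Prop) (hwf : well_founded lt) A F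
  (hA : approx_family lt A) (hF : transfinite_family lt A F) :
  forall a Y m n, F a Y -> m \in Y -> m < n -> n \notin Y -> F a (n |` (Y `\ m)).
Proof.
move=> a; induction (hwf a) as [a _ IH] => Y m n HY hm hmn hn.
have [hz [hs hl]] := hF.
case: (classify lt a) => [h|[[b h]|h]].
- have Y0 := proj1 (hz a h Y) HY. by rewrite Y0 in_fset0 in hm.
- case: (proj1 (hs a b h Y) HY) => [Y0|[p [Y' [HY' EY]]]].
    by rewrite Y0 in_fset0 in hm.
  apply: (proj2 (hs a b h _)); right.
  case: (eqVneq p m) => [pm|pm].
    exists n, (Y' `\ m); split.
      apply: (F_hered hwf hA hF HY'). apply/fsubsetP => x. by rewrite !inE => /andP [].
    rewrite EY pm. apply/fsetP => x; rewrite !inE. by case: (x =P m).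
  have hmY' : m \in Y'. move: hm. rewrite EY !inE. case/orP => // /eqP e.
    by rewrite e eqxx in pm.
  have hnY' : n \notin Y'. apply: contra hn => hn'. by rewrite EY !inE hn' orbT.
  exists p, (n |` (Y' `\ m)); split.
    exact: (IH b (proj1 h)).
  rewrite EY. apply/fsetP => x; rewrite !inE.
  case: (x =P m) => [->|_] /=; last by rewrite orbCA.
  by rewrite ?orbF (eq_sym m p) (negbTE pm).
- case: (proj1 (hl a h Y) HY) => [Y0|[k [hk hkmin [b [hb HbY]]]]].
    by rewrite Y0 in_fset0 in hm.
  have hn'' : n \in n |` (Y `\ m) by rewrite !inE eqxx.
  have [k1 [hk1 hk1min]] := fmin hn''.
  have [hAl _ _] := hA a h.
  apply: (proj2 (hl a h _)); right; exists k1; split => //; exists b; split.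
  + apply: (A_mono hA h hb). move: hk1; rewrite !inE => /orP [/eqP ->|/andP [_ hk1Y]].
      exact: leq_trans (hkmin m hm) (ltnW hmn).
    exact: hkmin.
  + exact: (IH b (hAl _ _ hb)).
Qed.

Lemma F_minrem O (lt : O -> O -> Prop) (hwf : well_founded lt) A F
  (hA : approx_family lt A) (hF : transfinite_family lt A F) :
  forall a b, is_succ_of lt a b -> forall X k, F a X -> k \in X ->
  (forall x, x \in X -> k <= x) -> F b (X `\ k).
Proof.
move=> a b h X k HX hk hkmin.
have [hz [hs hl]] := hF.
case: (proj1 (hs a b h X) HX) => [X0|[p [X' [HX' EX]]]].
  by rewrite X0 in_fset0 in hk.
case: (eqVneq p k) => [pk|pk].
  apply: (F_hered hwf hA hF HX'). apply/fsubsetP => x.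
  rewrite EX pk !inE. by case/andP => /negbTE -> .
have hkX' : k \in X'. move: hk. rewrite EX !inE. case/orP => // /eqP e.
  by rewrite e eqxx in pk.
case: (boolP (p \in X')) => hpX'.
  apply: (F_hered hwf hA hF HX'). apply/fsubsetP => x.
  rewrite EX !inE. case/andP => _ /orP [/eqP ->|] //.
have hkp : k < p.
  rewrite ltn_neqAle eq_sym pk /=. apply: hkmin. by rewrite EX !inE eqxx.
have := F_repl hwf hA hF HX' hkX' hkp hpX'.
congr (F b _). rewrite EX. apply/fsetP => x; rewrite !inE.
case: (x =P k) => [->|] /=; first by rewrite eq_sym (negbTE pk).
done.
Qed.

Lemma G_full O (lt : O -> O -> Prop)
  (htr : forall a b c, lt a b -> lt b c -> lt a c) (hwf : well_founded lt)
  B G (hB : approx_family lt B) (hG : transfinite_family lt B G) :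
  forall d, TT lt (G d) fset0 d.
Proof.
move=> d; induction (hwf d) as [d _ IH].
have [hz [hs hl]] := hG.
apply: TT_intro; first exact: F_empty hG d.
move=> b' hb' N.
case: (classify lt d) => [h|[[e h]|h]].
- by case: (h b').
- exists N; split => //.
  have He : TT lt (G e) fset0 b'.
    apply: (TT_mono htr (IH e (proj1 h))).
    by case: (proj2 h b' hb') => ?; [right|left].
  have := TT_transport (P := fun _ => True) (f := fun X => N |` X) (g := id) _ _ He I.
  apply.
  + move=> X _ HX. apply: (proj2 (hs d e h _)); right; by exists N, X.
  + move=> X _; exists 0 => j _; split => //.
    apply/fsetP => x; rewrite !inE. by rewrite orbCA.
- have [hBl hBs hBlim] := hB d h.
  have [N0 HN0] := hBlim b' hb'.
  have [c [hc hb'c]] := HN0 (maxn N N0) (leq_maxr _ _).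
  have hcd : lt c d := hBl _ _ hc.
  have [_ Hc] := TT_elim (IH c hcd).
  have [j' [hj' Hj']] := Hc b' hb'c (maxn N N0).
  exists j'; split; first exact: leq_trans (leq_maxl _ _) hj'.
  have := TT_transport (P := fun X => j' \in X /\ forall y, y \in X -> j' <= y)
     (f := id) (g := id) _ _ Hj'.
  apply.
  + move=> X [hX hXmin] HX. apply: (proj2 (hl d h _)); right; exists j'; split => //.
    exists c; split => //. exact: (A_mono hB h hc hj').
  + move=> X [hX hXmin]; exists j' => j hj; split => //; split.
      by rewrite !inE hX orbT.
    move=> y; rewrite !inE => /orP [/eqP ->|] //. exact: hXmin.
  + split; first by rewrite !inE eqxx.
    move=> y; rewrite !inE => /orP [/eqP ->|] //.
Qed.

Lemma F_rank O (lt : O -> O -> Prop)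
  (hirr : forall a, ~ lt a a)
  (htr : forall a b c, lt a b -> lt b c -> lt a c)
  (htri : forall a b, lt a b \/ a = b \/ lt b a)
  (hwf : well_founded lt)
  A F (hA : approx_family lt A) (hF : transfinite_family lt A F) :
  forall d, (forall k c, TT lt (F d) (k |` fset0) c -> lt c d) /\
            (forall c, TT lt (F d) fset0 c -> ~ lt d c).
Proof.
move=> d; induction (hwf d) as [d _ IH].
have [hz [hs hl]] := hF.
have L1 : forall k c, TT lt (F d) (k |` fset0) c -> lt c d.
  move=> k c HT.
  have Pk : k \in k |` fset0 /\ forall y, y \in k |` fset0 -> k <= y.
    split; first by rewrite !inE eqxx.
    by move=> y; rewrite !inE => /orP [/eqP ->|].
  case: (classify lt d) => [h|[[e h]|h]].
  - have [H _] := TT_elim HT. have := proj1 (hz d h _) H => /fsetP /(_ k).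
    by rewrite !inE eqxx.
  - have HT' : TT lt (F e) ((k |` fset0) `\ k) c.
      apply: (TT_transport (P := fun X => k \in X /\ forall y, y \in X -> k <= y)
      (f := fun X => X `\ k) (g := id) (F2 := F e) _ _ HT Pk).
    + move=> X [hX hXmin] HX. exact: (F_minrem hwf hA hF h HX hX hXmin).
    + move=> X [hX hXmin]; exists k.+1 => j hj; split; [split| |done].
      * by rewrite !inE hX orbT.
      * move=> y; rewrite !inE => /orP [/eqP ->|]; [exact: ltnW | exact: hXmin].
      * apply/fsetP => x; rewrite !inE. case: (x =P j) => [->|] //=.
        have : j != k by rewrite neq_ltn hj orbT.
        by move=> /negbTE; rewrite eq_sym => ->.
    have E0 : (k |` fset0) `\ k = fset0.
        apply/fsetP => x; rewrite !inE. by case: (x =P k).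
      rewrite E0 in HT'.
      have hne := proj2 (IH e (proj1 h)) c HT'.
      case: (htri c e) => [hce|[->|hec]].
      * exact: htr hce (proj1 h).
      * exact: proj1 h.
      * by case: hne.
  - have HT1 := TT_transport (P := fun X => k \in X /\ forall y, y \in X -> k <= y)
      (f := id) (g := id)
      (F2 := fun X => F d X /\ k \in X /\ forall y, y \in X -> k <= y) _ _ HT Pk.
    have HT2 : TT lt (fun X => F d X /\ k \in X /\ forall y, y \in X -> k <= y) (k |` fset0) c.
      apply: HT1.
      + by move=> X [hX hXmin] HX.
      + move=> X [hX hXmin]; exists k.+1 => j hj; split => //; split.
          by rewrite !inE hX orbT.
        move=> y; rewrite !inE => /orP [/eqP ->|]; [exact: ltnW | exact: hXmin].
    have [i [hi HTi]] : exists i, List.In i (A d k) /\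
        TT lt (fun X => F i X /\ forall y, y \in X -> k <= y) (k |` fset0) c.
      apply: (TT_split_list htr htri (l := A d k)
       (Fi := fun i X => F i X /\ forall y, y \in X -> k <= y) _ _ HT2).
    + move=> i X j [HX HXmin]; split.
        apply: (F_hered hwf hA hF HX). apply/fsubsetP => x hx. by rewrite !inE hx orbT.
      move=> y hy; apply: HXmin. by rewrite !inE hy orbT.
    + move=> X [HX [hX hXmin]].
      case: (proj1 (hl d h X) HX) => [X0|[k0 [hk0 hk0min [b [hb HbX]]]]].
        by rewrite X0 in_fset0 in hX.
      have ek : k0 = k by apply/eqP; rewrite eqn_leq hk0min // hXmin.
      exists b; split; first by rewrite -ek.
      by split.
    have [hAl _ _] := hA d h.
      have hid := hAl _ _ hi.
      have HTi' : TT lt (F i) (k |` fset0) c.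
        have := TT_transport (P := fun _ => True) (f := id) (g := id) (F2 := F i) _ _ HTi I.
        apply.
        * by move=> X _ [].
        * by move=> X _; exists 0.
      exact: htr (proj1 (IH i hid) k c HTi') hid.
split => // c HT hdc.
have [_ H] := TT_elim HT.
have [j [_ Hj]] := H d hdc 0.
exact: hirr d (L1 j d Hj).
Qed.
Local Open Scope nat_scope.

Definition smax O (f : O -> nat) (s : seq O) :=
  foldr (fun e acc => maxn (f e) acc) 0 s.

Lemma smax_ge O (f : O -> nat) s e : List.In e s -> f e <= smax f s.
Proof.
elim: s => [|x s IHs] //= [<-|h]; first exact: leq_maxl.
exact: leq_trans (IHs h) (leq_maxr _ _).
Qed.

Fixpoint upto (g : nat -> nat) (i : nat) : nat :=
  if i is i'.+1 then maxn (g i) (upto g i') else g 0.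

Lemma upto_ge g k i : k <= i -> g k <= upto g i.
Proof.
elim: i => [|i IHi]; first by rewrite leqn0 => /eqP ->.
rewrite leq_eqVlt => /orP [/eqP ->|hk] /=; first exact: leq_maxl.
exact: leq_trans (IHi hk) (leq_maxr _ _).
Qed.

Lemma incr_ge (m : nat -> nat) : incr m -> forall i, i <= m i.
Proof.
move=> hm; elim=> [|i IHi] //. exact: leq_ltn_trans IHi (hm i).
Qed.

Lemma incr_mono (m : nat -> nat) : incr m -> forall i j, i < j -> m i < m j.
Proof.
move=> hm i; elim=> [|j IHj] //. rewrite ltnS leq_eqVlt => /orP [/eqP ->|h].
  exact: hm.
exact: ltn_trans (IHj h) (hm j).
Qed.

Lemma image_mem (n : nat -> nat) (E : {fset nat}) x :
  x \in fam_image n E -> exists2 i, i \in E & x = n i.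
Proof. by move/imfsetP => [i hi ->]; exists i. Qed.

Lemma F_limit_intro O (lt : O -> O -> Prop) A F
  (hA : approx_family lt A) (hF : transfinite_family lt A F) a
  (h : is_limit lt a) (X : {fset nat}) N c :
  (forall x, x \in X -> N <= x) -> List.In c (A a N) -> F c X -> F a X.
Proof.
move=> hN hc HX. have [hz [hs hl]] := hF.
apply: (proj2 (hl a h X)).
case: (boolP (X == fset0)) => [/eqP->|/fset0Pn [x hx]]; [by left|right].
have [k [hk hkmin]] := fmin hx.
exists k; split => //; exists c; split => //.
exact: (A_mono hA h hc (hN k hk)).
Qed.

Lemma F_large_aux O (lt : O -> O -> Prop)
  (htr : forall a b c, lt a b -> lt b c -> lt a c)
  (hwf : well_founded lt)
  A F (hA : approx_family lt A) (hF : transfinite_family lt A F)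
  B G (hB : approx_family lt B) (hG : transfinite_family lt B G) :
  forall a d, (lt d a \/ d = a) -> exists phi : nat -> nat,
    forall (n : nat -> nat) E, G d E -> (forall i, i \in E -> phi i <= n i) ->
    F a (fam_image n E).
Proof.
move=> a; induction (hwf a) as [a _ IH] => d hd.
have [hz [hs hl]] := hF; have [gz [gs gl]] := hG.
have Fe : forall b n, F b (fam_image n fset0).
  by move=> b n; rewrite /fam_image imfset0; exact: F_empty hF b.
case: (classify lt a) => [h|[[b h]|h]].
- case: hd => [hda|->]; first by case: (h d).
  exists (fun _ => 0) => n E HE _. rewrite (proj1 (gz a h E) HE). exact: Fe.
- case: hd => [hda|->].
    have [phi Hphi] := IH b (proj1 h) d (proj1 (or_comm (d = b) (lt d b)) (proj2 h d hda)).
    exists phi => n E HE Hn. exact: (F_succ_incl hF h (Hphi n E HE Hn)).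
  have [phi Hphi] := IH b (proj1 h) b (or_intror erefl).
  exists phi => n E HE Hn.
  case: (proj1 (gs a b h E) HE) => [->|[p [E' [HE' EE]]]]; first exact: Fe.
  rewrite EE /fam_image imfsetU1. apply: (proj2 (hs a b h _)); right.
  exists (n p), (fam_image n E'); split => //.
  apply: Hphi => // i hi. apply: Hn. by rewrite EE !inE hi orbT.
- have [hAl hAs hAlim] := hA a h.
  have [hBl hBs hBlim] := hB a h.
  case: hd => [hda|->].
    have [N0 HN0] := hAlim d hda.
    have [c [hc hdc]] := HN0 N0 (leqnn _).
    have [phi Hphi] := IH c (hAl _ _ hc) d (or_introl hdc).
    exists (fun i => N0 + phi i) => n E HE Hn.
    apply: (F_limit_intro hA hF h (N := N0) (c := c)) => //.
      move=> x /image_mem [i hi ->]. exact: leq_trans (leq_addr _ _) (Hn i hi).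
    apply: Hphi => // i hi. exact: leq_trans (leq_addl _ _) (Hn i hi).
  have Hex : forall e, exists w : nat * (nat -> nat), lt e a ->
      exists c, [/\ List.In c (A a w.1), lt e c &
        forall (n : nat -> nat) E, G e E -> (forall i, i \in E -> w.2 i <= n i) ->
        F c (fam_image n E)].
    move=> e. case: (classic (lt e a)) => he; last by exists (0, fun _ => 0).
    have [N0 HN0] := hAlim e he.
    have [c [hc hec]] := HN0 N0 (leqnn _).
    have [phi Hphi] := IH c (hAl _ _ hc) e (or_introl hec).
    by exists (N0, phi) => _; exists c.
  pose W := fun e => proj1_sig (constructive_indefinite_description _ (Hex e)).
  have HW : forall e, lt e a -> exists c, [/\ List.In c (A a (W e).1), lt e c &
        forall (n : nat -> nat) E, G e E -> (forall i, i \in E -> (W e).2 i <= n i) ->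
        F c (fam_image n E)].
    move=> e he. rewrite /W. case: (constructive_indefinite_description _ _) => w /= hw.
    exact: hw.
  exists (fun i => upto (fun k => smax (fun e => (W e).1 + (W e).2 i) (B a k)) i).
  move=> n E HE Hn.
  case: (proj1 (gl a h E) HE) => [->|[k [hk hkmin [e [he HeE]]]]]; first exact: Fe.
  have hea := hBl _ _ he.
  have [c [hc hec Hc]] := HW e hea.
  have bound : forall i, i \in E -> (W e).1 + (W e).2 i <= n i.
    move=> i hi. apply: leq_trans (Hn i hi).
    apply: leq_trans (upto_ge (fun k => smax (fun e => (W e).1 + (W e).2 i) (B a k)) (hkmin i hi)).
    exact: (smax_ge (fun e => (W e).1 + (W e).2 i) he).
  apply: (F_limit_intro hA hF h (N := (W e).1) (c := c)) => //.
    move=> x /image_mem [i hi ->]. exact: leq_trans (leq_addr _ _) (bound i hi).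
  apply: Hc => // i hi. exact: leq_trans (leq_addl _ _) (bound i hi).
Qed.

Fixpoint psi (phi : nat -> nat) (i : nat) : nat :=
  if i is i'.+1 then (psi phi i').+1 + phi i else phi 0.

Fixpoint seqL (nx : nat -> nat) (i : nat) : nat :=
  if i is i'.+1 then nx (seqL nx i').+1 else nx 0.

Theorem corollary4 (O : Type) (lt : O -> O -> Prop)
    (hO : countable_wellorder lt)
    (A : O -> nat -> seq O) (F : O -> {fset nat} -> Prop)
    (hA : approx_family lt A) (hF : transfinite_family lt A F)
    (B : O -> nat -> seq O) (G : O -> {fset nat} -> Prop)
    (hB : approx_family lt B) (hG : transfinite_family lt B G)
    (a : O) (L : nat -> Prop) (hL : infinite_set L) :
  is_sup lt (fun b => large G b (F a) L) a.
Proof.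
case: hO => hirr htr htri hwf _.
split.
- move=> b Hl hab.
  pose nx := fun x => proj1_sig (constructive_indefinite_description _ (hL x)).
  have Hnx : forall x, x <= nx x /\ L (nx x).
    move=> x; rewrite /nx; case: (constructive_indefinite_description _ _) => y /= hy.
    exact: hy.
  have hinc : incr (seqL nx).
    move=> i /=. exact: (proj1 (Hnx _)).
  have hLm : forall i, L (seqL nx i).
    by case=> [|i] /=; apply: (proj2 (Hnx _)).
  have [n [hn _ hGF]] := Hl _ hinc hLm.
  have HT : TT lt (F a) (fam_image n fset0) b.
    apply: (TT_transport (P := fun _ => True) (f := fam_image n) (g := n) _ _
      (G_full htr hwf hB hG b) I).
    + by move=> X _ HX; exact: hGF.
    + move=> X _; exists 0 => j _; split => //.
      * by rewrite /fam_image imfsetU1.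
      * exact: incr_ge.
  have := proj2 (F_rank hirr htr htri hwf hA hF a) b.
  rewrite /fam_image imfset0 in HT.
  by move=> /(_ HT).
- move=> c Hc hca. apply: (Hc a _ hca).
  move=> m hm _.
  have [phi Hphi] := F_large_aux htr hwf hA hF hB hG (or_intror (erefl a)).
  have hpsi : incr (psi phi).
    move=> i /=. exact: leq_addr.
  have hphi : forall i, phi i <= psi phi i.
    by case=> [|i] //=; rewrite leq_addl.
  exists (fun i => m (psi phi i)); split.
  + move=> i. exact: incr_mono hm _ _ (hpsi i).
  + by move=> i; exists (psi phi i).
  + move=> E HE. apply: Hphi => // i hi.
    exact: leq_trans (hphi i) (incr_ge hm _).
Qed.
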